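(* Let $\epsilon>0$ and let $\gamma$ be an arclength-parameterized curve in $\mathbb{R}^3$ whose curvature is bounded by $1$, contained in the intersection of two orthogonal slabs of width $\epsilon$, each of which contains the $y$-axis. Then $|\langle T, v\rangle| < 3\sqrt{\epsilon}$ at every point of $\gamma$, where $T$ is the unit tangent vector of $\gamma$ and $v$ is any unit vector perpendicular to $e_2$.
   Context: $e_2$ denotes the unit vector in the direction of the $y$-axis in $\mathbb{R}^3$ with coordinates $(x,y,z)$. A slab of width $\epsilon$ is the closed region between two parallel affine planes at distance $\epsilon$ apart. *)

(* Defs.v *)
From Stdlib Require Import Reals.
From Coquelicot Require Import Coquelicot.
Open Scope R_scope.

Record vec3 : Type := V3 { vx : R; vy : R; vz : R }.

Definition dot3 (u w : vec3) : R := vx u * vx w + vy u * vy w + vz u * vz w.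
Definition norm3 (u : vec3) : R := sqrt (dot3 u u).

Definition e2 : vec3 := V3 0 1 0.

Definition has_deriv3 (f g : R -> vec3) : Prop :=
  forall t, is_derive (fun s => vx (f s)) t (vx (g t))
         /\ is_derive (fun s => vy (f s)) t (vy (g t))
         /\ is_derive (fun s => vz (f s)) t (vz (g t)).

(* Closed slab of width eps: region between the parallel planes
   <n,p> = c and <n,p> = c + eps, n a unit normal. *)
Definition in_slab (n : vec3) (c eps : R) (p : vec3) : Prop :=
  c <= dot3 n p <= c + eps.

Definition slab_contains_y_axis (n : vec3) (c eps : R) : Prop :=
  forall y : R, in_slab n c eps (V3 0 y 0).

(* Main.v *)
Require Import Defs.
From Stdlib Require Import Reals Lra Psatz.
From Coquelicot Require Import Coquelicot.
Open Scope R_scope.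

Lemma dval (f : R -> R) x d d' : is_derive f x d -> d = d' -> is_derive f x d'.
Proof. intros H ->; exact H. Qed.

Lemma mono (p dp : R -> R) a b : a <= b ->
  (forall x, is_derive p x (dp x)) -> (forall x, a <= x <= b -> 0 <= dp x) -> p a <= p b.
Proof.
  intros Hab Hd Hpos.
  destruct (MVT_gen p a b dp) as [c [Hc Heq]].
  - intros; apply Hd.
  - intros x _. apply continuity_pt_filterlim. apply (ex_derive_continuous (V:=R_NormedModule) p).
    eexists; apply Hd.
  - rewrite Rmin_left in Hc by lra. rewrite Rmax_right in Hc by lra.
    assert (0 <= dp c * (b - a)) by (apply Rmult_le_pos; [apply Hpos; lra| lra]).
    lra.
Qed.

Lemma d_sum (f g : R -> R) x df dg : is_derive f x df -> is_derive g x dg ->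
  is_derive (fun y => f y + g y) x (df + dg).
Proof. intros; apply (is_derive_plus f g); auto. Qed.

Lemma d_sub (f g : R -> R) x df dg : is_derive f x df -> is_derive g x dg ->
  is_derive (fun y => f y - g y) x (df - dg).
Proof. intros; apply (is_derive_minus f g); auto. Qed.

Lemma d_sq t x : is_derive (fun y => (y - t) * (y - t) / 2) x (x - t).
Proof. auto_derive; auto; lra. Qed.

Lemma d_lin k x : is_derive (fun y => k * y) x k.
Proof. auto_derive; auto; lra. Qed.

Lemma one_dim (f g h : R -> R) c eps t :
  (forall x, is_derive f x (g x)) -> (forall x, is_derive g x (h x)) ->
  (forall x, Rabs (h x) <= 1) -> (forall x, c <= f x <= c + eps) ->
  g t * g t <= 2 * eps.
Proof.
  intros Hf Hg Hh Hb.
  assert (Hh' : forall x, -1 <= h x <= 1) by (intro x; specialize (Hh x);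
    apply Rabs_le_between in Hh; lra).
  assert (G1 : forall x, t <= x -> g x - g t + (x - t) >= 0).
  { intros x Hx. assert (g t + t <= g x + x); [|lra].
    apply (mono (fun y => g y + y) (fun y => h y + 1)); auto.
    - intro y. apply d_sum; auto. apply (is_derive_id y).
    - intros y _. specialize (Hh' y). lra. }
  assert (G2 : forall x, t <= x -> g t - g x + (x - t) >= 0).
  { intros x Hx. assert (t - g t <= x - g x); [|lra].
    apply (mono (fun y => y - g y) (fun y => 1 - h y)); auto.
    - intro y. apply d_sub; auto. apply (is_derive_id y).
    - intros y _. specialize (Hh' y). lra. }
  set (s := Rabs (g t)).
  assert (Hs : 0 <= s) by apply Rabs_pos.
  assert (P1 : f t - g t * t + (t - t) * (t - t) / 2 <=
               f (t + s) - g t * (t + s) + (t + s - t) * (t + s - t) / 2).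
  { apply (mono (fun y => f y - g t * y + (y - t) * (y - t) / 2)
                (fun y => g y - g t + (y - t))); [lra| |].
    - intro y. apply d_sum; [apply d_sub; [auto| apply d_lin]| apply d_sq].
    - intros y Hy. specialize (G1 y ltac:(lra)). lra. }
  assert (P2 : g t * t - f t + (t - t) * (t - t) / 2 <=
               g t * (t + s) - f (t + s) + (t + s - t) * (t + s - t) / 2).
  { apply (mono (fun y => g t * y - f y + (y - t) * (y - t) / 2)
                (fun y => g t - g y + (y - t))); [lra| |].
    - intro y. apply d_sum; [apply d_sub; [apply d_lin|auto]| apply d_sq].
    - intros y Hy. specialize (G2 y ltac:(lra)). lra. }
  pose proof (Hb t). pose proof (Hb (t + s)).
  unfold s in *. destruct (Rle_dec 0 (g t)) as [Hp|Hn].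
  - rewrite Rabs_right in * by lra. nra.
  - rewrite Rabs_left in * by lra. nra.
Qed.

Lemma norm1 u : norm3 u = 1 -> dot3 u u = 1.
Proof.
  unfold norm3; intro H.
  assert (0 <= dot3 u u) by (unfold dot3; nra).
  rewrite <- (sqrt_sqrt (dot3 u u)) by auto. rewrite H; ring.
Qed.

Lemma normle u : norm3 u <= 1 -> dot3 u u <= 1.
Proof.
  unfold norm3; intro H.
  assert (0 <= dot3 u u) by (unfold dot3; nra).
  rewrite <- (sqrt_sqrt (dot3 u u)) by auto.
  pose proof (sqrt_pos (dot3 u u)). nra.
Qed.

Lemma ny0 n c eps : slab_contains_y_axis n c eps -> vy n = 0.
Proof.
  unfold slab_contains_y_axis, in_slab, dot3; simpl; intro H.
  destruct (Req_dec (vy n) 0) as [|Hn]; auto. exfalso.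
  destruct (H 0) as [H1 H2].
  destruct (H ((Rabs c + eps + 1) / vy n)) as [H3 H4].
  replace (vy n * ((Rabs c + eps + 1) / vy n)) with (Rabs c + eps + 1) in * by (field; auto).
  pose proof (Rle_abs c). lra.
Qed.

Lemma d_dot F G n : has_deriv3 F G -> forall t,
  is_derive (fun s => dot3 n (F s)) t (dot3 n (G t)).
Proof.
  intros H t. destruct (H t) as [Hx [Hy Hz]]. unfold dot3.
  apply d_sum; [apply d_sum|]; apply is_derive_scal; auto.
Qed.

Theorem lemma2p5
  (eps : R) (gamma T K : R -> vec3)
  (n1 n2 : vec3) (c1 c2 : R) (v : vec3) (t : R) :
  0 < eps ->
  has_deriv3 gamma T ->
  (forall s, norm3 (T s) = 1) ->
  has_deriv3 T K ->
  (forall s, norm3 (K s) <= 1) ->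
  norm3 n1 = 1 -> norm3 n2 = 1 -> dot3 n1 n2 = 0 ->
  slab_contains_y_axis n1 c1 eps ->
  slab_contains_y_axis n2 c2 eps ->
  (forall s, in_slab n1 c1 eps (gamma s) /\ in_slab n2 c2 eps (gamma s)) ->
  norm3 v = 1 -> dot3 v e2 = 0 ->
  Rabs (dot3 (T t) v) < 3 * sqrt eps.
Proof.
  intros He Hg HT Hk HK Hn1 Hn2 H12 S1 S2 Hin Hv Hve.
  assert (B : forall n c, norm3 n = 1 -> slab_contains_y_axis n c eps ->
             (forall s, in_slab n c eps (gamma s)) ->
             dot3 n (T t) * dot3 n (T t) <= 2 * eps).
  { intros n c Hn _ Hs.
    apply (one_dim (fun s => dot3 n (gamma s)) (fun s => dot3 n (T s))
                   (fun s => dot3 n (K s)) c eps t).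
    - apply d_dot; auto.
    - apply d_dot; auto.
    - intro x. assert (Q : dot3 n (K x) * dot3 n (K x) <= 1).
      2:{ apply Rabs_le; split; nra. }
      pose proof (norm1 _ Hn) as E1. pose proof (normle _ (HK x)) as E2.
      revert E1 E2. clear -n. unfold dot3.
      destruct n as [a b c']; destruct (K x) as [p q r]; simpl; intros E1 E2.
      assert (0 <= (a*q-b*p)^2 + (a*r-c'*p)^2 + (b*r-c'*q)^2) by (repeat apply Rplus_le_le_0_compat; apply pow2_ge_0).
      assert ((a*p+b*q+c'*r)*(a*p+b*q+c'*r) = (a*a+b*b+c'*c')*(p*p+q*q+r*r)
         - ((a*q-b*p)^2 + (a*r-c'*p)^2 + (b*r-c'*q)^2)) by ring.
      nra.
    - intro x. apply Hs. }
  pose proof (B n1 c1 Hn1 S1 (fun s => proj1 (Hin s))) as B1.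
  pose proof (B n2 c2 Hn2 S2 (fun s => proj2 (Hin s))) as B2.
  pose proof (ny0 _ _ _ S1) as Y1. pose proof (ny0 _ _ _ S2) as Y2.
  pose proof (norm1 _ Hn1) as N1. pose proof (norm1 _ Hn2) as N2.
  pose proof (norm1 _ Hv) as NV. pose proof (norm1 _ (HT t)) as NT.
  destruct n1 as [p y1 q]; destruct n2 as [r y2 s]; destruct v as [vx' vy' vz'];
  destruct (T t) as [tx ty tz].
  unfold dot3, e2 in *; simpl in *. subst y1 y2.
  assert (vy' = 0) by lra. subst vy'.
  set (d := p * s - q * r).
  assert (Er : r = - d * q).
  { unfold d. replace (- (p * s - q * r) * q) with (r * (p*p+q*q) - p * (p*r+q*s)) by ring.
    replace (p*p+q*q) with 1 by lra. replace (p*r+q*s) with 0 by lra. ring. }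
  assert (Es : s = d * p).
  { unfold d. replace ((p * s - q * r) * p) with (s * (p*p+q*q) - q * (p*r+q*s)) by ring.
    replace (p*p+q*q) with 1 by lra. replace (p*r+q*s) with 0 by lra. ring. }
  assert (Dd : d * d = 1).
  { rewrite Er, Es in N2. nra. }
  set (a := vx' * p + vz' * q). set (b := vx' * r + vz' * s).
  set (m1 := p * tx + q * tz). set (m2 := r * tx + s * tz).
  assert (Eq : tx * vx' + ty * 0 + tz * vz' = a * m1 + b * m2).
  { unfold a, b, m1, m2. rewrite Er, Es.
    replace ((vx' * p + vz' * q) * (p * tx + q * tz) +
      (vx' * (- d * q) + vz' * (d * p)) * (- d * q * tx + d * p * tz))
    with ((vx' * p + vz' * q) * (p * tx + q * tz) +
      (d * d) * (vz' * p - vx' * q) * (p * tz - q * tx)) by ring.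
    rewrite Dd.
    assert (Hpq : p * p + q * q = 1) by lra.
    transitivity ((tx * vx' + tz * vz') * (p * p + q * q)); [rewrite Hpq; ring | ring]. }
  assert (Eab : a * a + b * b = 1).
  { unfold a, b. rewrite Er, Es.
    replace ((vx' * p + vz' * q) * (vx' * p + vz' * q) +
      (vx' * (- d * q) + vz' * (d * p)) * (vx' * (- d * q) + vz' * (d * p)))
    with ((vx' * p + vz' * q) * (vx' * p + vz' * q) +
      (d * d) * (vz' * p - vx' * q) * (vz' * p - vx' * q)) by ring.
    rewrite Dd.
    transitivity ((vx' * vx' + vz' * vz') * (p * p + q * q)); [ring|].
    replace (vx' * vx' + vz' * vz') with 1 by lra.
    replace (p * p + q * q) with 1 by lra. ring. }
  assert (B1' : m1 * m1 <= 2 * eps) by (unfold m1; nra).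
  assert (B2' : m2 * m2 <= 2 * eps) by (unfold m2; nra).
  rewrite Eq.
  assert (Sq : (a * m1 + b * m2) * (a * m1 + b * m2) < 9 * eps).
  { assert (0 <= (a * m2 - b * m1) ^ 2) by apply pow2_ge_0.
    assert (I : (a * m1 + b * m2) * (a * m1 + b * m2) + (a * m2 - b * m1) ^ 2
            = (a*a+b*b) * (m1*m1+m2*m2)) by ring. rewrite Eab in I. lra. }
  rewrite <- sqrt_Rsqr_abs.
  replace (3 * sqrt eps) with (sqrt (9 * eps)).
  - apply sqrt_lt_1; unfold Rsqr; [apply Rle_0_sqr | lra | exact Sq].
  - rewrite sqrt_mult by lra. replace 9 with (3 * 3) by ring.
    rewrite sqrt_square by lra. reflexivity.
Qed.
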